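(* Let $\sigma$ be an involutive non-degenerate quiver-theoretic Yang--Baxter map on a quiver $\mathscr{A}$, and let $E$ be the closure of (the image of) $\mathscr{A}$ under right-lcms in the structure category $\mathscr{C}(\sigma)$ (a Garside family of $\mathscr{C}(\sigma)$). Then $E$ is a perfect Garside family.
   Context: Write $\sigma(x,y)=(x\rightharpoonup y,x\leftharpoonup y)$. A quiver-theoretic Yang--Baxter map is a source/target-preserving map $\sigma$ on composable pairs satisfying the braid relation; involutive: $\sigma^2=\mathrm{id}$; non-degenerate: all $x\rightharpoonup\cdot\colon\mathscr{A}(\mathfrak{t}(x),\Lambda)\to\mathscr{A}(\mathfrak{s}(x),\Lambda)$ and $\cdot\leftharpoonup y\colon\mathscr{A}(\Lambda,\mathfrak{s}(y))\to\mathscr{A}(\Lambda,\mathfrak{t}(y))$ bijective. $\mathscr{C}(\sigma)$ is the category presented by generators $\mathscr{A}$ and relations $x|y\sim(x\rightharpoonup y)|(x\leftharpoonup y)$; it is left-Ore (cancellative, any two elements with same target have a common left-multiple) and admits left-lcms. For a category $\mathscr{C}$ and subfamily $\mathscr{S}$, $\mathscr{S}^\sharp=\mathscr{S}\mathscr{C}^\times\cup\mathscr{C}^\times$ ($\mathscr{C}^\times$ invertible elements). A left-lcm witness on $\mathscr{S}^\sharp$ is a partial map $\tilde\theta$ from $\mathscr{S}^\sharp\times\mathscr{S}^\sharp$ to paths in $\mathscr{S}^\sharp$ such that $\tilde\theta(s,t)$ and $\tilde\theta(t,s)$ are defined iff $s,t$ admit a left-lcm, and then $\tilde\theta(s,t)t=\tilde\theta(t,s)s$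 is a left-lcm of $s,t$; it is short if its values lie in $\mathscr{S}^\sharp$ or are empty. For a left-Ore category admitting left-lcms, a Garside family $\mathscr{S}$ is perfect if there is a short left-lcm witness $\tilde\theta$ on $\mathscr{S}^\sharp$ such that $\tilde\theta(s,t)t\in\mathscr{S}^\sharp$ for all $s,t$ with the same target. *)

(* Defs.v *)
From Stdlib Require Import List Relation_Operators.
From mathcomp Require Import all_boot.


Set Implicit Arguments.
Unset Strict Implicit.
Unset Printing Implicit Defensive.

Section YB.
Variables (V A : Type) (src tgt : A -> V) (sigma : A -> A -> A * A).

(** ** Yang--Baxter map axioms.  sigma x y = (x ⇀ y, x ↼ y); only its values
    on composable pairs (tgt x = src y) matter. *)
Definition s12 (w : A * A * A) : A * A * A :=
  let: (a, b, c) := w in ((sigma a b).1, (sigma a b).2, c).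
Definition s23 (w : A * A * A) : A * A * A :=
  let: (a, b, c) := w in (a, (sigma b c).1, (sigma b c).2).

Definition qYB_map : Prop :=
  (forall x y, tgt x = src y ->
     [/\ src (sigma x y).1 = src x,
         tgt (sigma x y).1 = src (sigma x y).2 &
         tgt (sigma x y).2 = tgt y]) /\
  (forall x y z, tgt x = src y -> tgt y = src z ->
     s12 (s23 (s12 (x, y, z))) = s23 (s12 (s23 (x, y, z)))).

Definition involutive_qYB : Prop :=
  forall x y, tgt x = src y -> sigma (sigma x y).1 (sigma x y).2 = (x, y).

Definition nondegenerate_qYB : Prop :=
  (forall x u, src u = src x ->
     exists! y, src y = tgt x /\ (sigma x y).1 = u) /\
  (forall y w, tgt w = tgt y ->
     exists! x, tgt x = src y /\ (sigma x y).2 = w).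

Definition qpath := (V * seq A)%type.
Definition psrc (p : qpath) : V := p.1.
Definition ptgt (p : qpath) : V := last p.1 (map tgt p.2).
Fixpoint valid_from (v : V) (l : seq A) : Prop :=
  match l with
  | [::] => True
  | x :: l' => src x = v /\ valid_from (tgt x) l'
  end.
Definition valid (p : qpath) : Prop := valid_from p.1 p.2.
(* composition in diagrammatic order: p then q (meaningful if ptgt p = psrc q) *)
Definition comp (p q : qpath) : qpath := (p.1, p.2 ++ q.2).
Definition idp (v : V) : qpath := (v, [::]).
Definition arrow_path (x : A) : qpath := (src x, [:: x]).

(** ** The structure category C(sigma): paths modulo the congruence
    generated by x|y ~ (x ⇀ y)|(x ↼ y). *)
Definition ystep (p q : qpath) : Prop :=
  p.1 = q.1 /\ exists l1 l2 x y, tgt x = src y /\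
    p.2 = l1 ++ x :: y :: l2 /\
    q.2 = l1 ++ (sigma x y).1 :: (sigma x y).2 :: l2.
Definition eqv : qpath -> qpath -> Prop := clos_refl_sym_trans qpath ystep.

Definition invertible (p : qpath) : Prop :=
  valid p /\ exists q, [/\ valid q, psrc q = ptgt p, ptgt q = psrc p,
    eqv (comp p q) (idp (psrc p)) & eqv (comp q p) (idp (psrc q))].

Definition ldiv (f g : qpath) : Prop :=
  [/\ valid f, valid g &
   exists h, [/\ valid h, psrc h = ptgt f & eqv (comp f h) g]].
Definition rdiv (s g : qpath) : Prop :=
  [/\ valid s, valid g &
   exists f, [/\ valid f, ptgt f = psrc s & eqv (comp f s) g]].

Definition is_rlcm (f g h : qpath) : Prop :=
  [/\ ldiv f h, ldiv g h & forall h', ldiv f h' -> ldiv g h' -> ldiv h h'].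
Definition is_llcm (s t h : qpath) : Prop :=
  [/\ rdiv s h, rdiv t h & forall h', rdiv s h' -> rdiv t h' -> rdiv h h'].
Definition has_llcm (s t : qpath) : Prop := exists h, is_llcm s t h.

Definition sharp (S : qpath -> Prop) (g : qpath) : Prop :=
  valid g /\
  ((exists s e, [/\ S s, valid s, invertible e, psrc e = ptgt s &
                    eqv (comp s e) g]) \/ invertible g).

Inductive rlcm_closure : qpath -> Prop :=
| rc_gen (x : A) (p : qpath) :
    valid p -> eqv p (arrow_path x) -> rlcm_closure p
| rc_lcm (f g h : qpath) :
    rlcm_closure f -> rlcm_closure g -> is_rlcm f g h -> rlcm_closure h.

Definition greedy (S : qpath -> Prop) (s1 s2 : qpath) : Prop :=
  forall s f, S s -> valid f -> ptgt f = psrc s1 ->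
    ldiv s (comp (comp f s1) s2) -> ldiv s (comp f s1).

Fixpoint pchain (v : V) (ss : seq qpath) (w : V) : Prop :=
  match ss with
  | [::] => v = w
  | s :: ss' => [/\ valid s, psrc s = v & pchain (ptgt s) ss' w]
  end.

Fixpoint greedy_chain (S : qpath -> Prop) (ss : seq qpath) : Prop :=
  match ss with
  | s1 :: ((s2 :: _) as ss') => greedy S s1 s2 /\ greedy_chain S ss'
  | _ => True
  end.

Definition eval_from (v : V) (ss : seq qpath) : qpath :=
  (v, flatten (map snd ss)).

Definition Garside (S : qpath -> Prop) : Prop :=
  forall g, valid g -> exists ss,
    [/\ pchain (psrc g) ss (ptgt g),
        (forall s, List.In s ss -> sharp S s),
        greedy_chain S ss &
        eqv (eval_from (psrc g) ss) g].

Fixpoint seq_eqv (ss uu : seq qpath) : Prop :=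
  match ss, uu with
  | [::], [::] => True
  | s :: ss', t :: uu' => eqv s t /\ seq_eqv ss' uu'
  | _, _ => False
  end.
Definition opt_seq_eqv (o1 o2 : option (seq qpath)) : Prop :=
  match o1, o2 with
  | None, None => True
  | Some ss, Some uu => seq_eqv ss uu
  | _, _ => False
  end.

Definition lmul (ss : seq qpath) (t : qpath) : qpath :=
  (match ss with s0 :: _ => psrc s0 | [::] => psrc t end,
   flatten (map snd ss) ++ t.2).

(* theta is a (partial, via option) map on S^sharp x S^sharp to paths of
   S^sharp, well defined on elements of C(sigma) *)
Definition llcm_witness (S : qpath -> Prop)
    (theta : qpath -> qpath -> option (seq qpath)) : Prop :=
  [/\ (forall s t s' t', sharp S s -> sharp S t -> sharp S s' -> sharp S t' ->
         eqv s s' -> eqv t t' -> opt_seq_eqv (theta s t) (theta s' t')),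
      (forall s t, sharp S s -> sharp S t ->
         (theta s t <> None <-> has_llcm s t)) &
      (forall s t ss uu, sharp S s -> sharp S t ->
         theta s t = Some ss -> theta t s = Some uu ->
         [/\ (exists v, pchain v ss (psrc t)),
             (forall u, List.In u ss -> sharp S u),
             (exists v, pchain v uu (psrc s)),
             (forall u, List.In u uu -> sharp S u) &
             eqv (lmul ss t) (lmul uu s) /\ is_llcm s t (lmul ss t)])].

Definition short_witness (S : qpath -> Prop)
    (theta : qpath -> qpath -> option (seq qpath)) : Prop :=
  forall s t ss, sharp S s -> sharp S t -> theta s t = Some ss ->
    size ss <= 1.

Definition perfect (S : qpath -> Prop) : Prop :=
  exists theta, [/\ llcm_witness S theta, short_witness S theta &
    forall s t ss, sharp S s -> sharp S t -> ptgt s = ptgt t ->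
      theta s t = Some ss -> sharp S (lmul ss t)].

End YB.

(* Main.v *)
Require Import Defs.
From Stdlib Require Import List Permutation Lia Relation_Operators ClassicalEpsilon Classical FunctionalExtensionality PropExtensionality.
From mathcomp Require Import all_boot zify.
Require Import Defs.

Set Implicit Arguments.
Unset Strict Implicit.
Section Gen.
Variables (V A : Type) (src tgt : A -> V) (sigma : A -> A -> A * A).
Hypothesis HYB : qYB_map src tgt sigma.
Hypothesis Hinv : involutive_qYB src tgt sigma.
Hypothesis Hnd : nondegenerate_qYB src tgt sigma.

Local Notation L x y := (sigma x y).1.
Local Notation R x y := (sigma x y).2.
Local Notation qp := (qpath V A).
Local Notation eqv := (eqv src tgt sigma).
Local Notation ystep := (ystep src tgt sigma).
Local Notation valid := (valid src tgt).
Local Notation vf := (valid_from src tgt).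
Local Notation ptgt := (ptgt tgt).

Lemma typ x y : tgt x = src y ->
  [/\ src (L x y) = src x, tgt (L x y) = src (R x y) & tgt (R x y) = tgt y].
Proof. by move=> h; case: HYB => H _; apply: H. Qed.

Lemma vf_cat v l1 l2 : vf v (l1 ++ l2) <-> vf v l1 /\ vf (last v (map tgt l1)) l2.
Proof.
elim: l1 v => [|x l1 IH] v /=; first by tauto.
rewrite IH; tauto.
Qed.

Lemma ystep_fst p q : ystep p q -> p.1 = q.1.
Proof. by case. Qed.

Lemma ystep_size p q : ystep p q -> size p.2 = size q.2.
Proof. by case=> _ [l1 [l2 [x [y [_ [-> ->]]]]]]; rewrite !size_cat. Qed.

Lemma ystep_ptgt p q : ystep p q -> ptgt p = ptgt q.
Proof.
case: p q => [v l] [w l'] [/= <- [l1 [l2 [x [y [hxy [-> ->]]]]]]].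
rewrite /Defs.ptgt /= !map_cat !last_cat /=.
case: l2 => [|z l2] //=. by case: (typ hxy) => _ _ ->.
Qed.

Lemma ystep_valid p q : ystep p q -> (valid p <-> valid q).
Proof.
case: p q => [v l] [w l'] [/= <- [l1 [l2 [x [y [hxy [-> ->]]]]]]].
rewrite /Defs.valid /= !vf_cat /=.
case: (typ hxy) => h1 h2 h3.
have E : last v (map tgt l1) = last v (map tgt l1) by [].
rewrite h1 h2 h3 hxy. tauto.
Qed.

Lemma eqv_fst p q : eqv p q -> p.1 = q.1.
Proof.
elim=> [a b /ystep_fst|a|a b _ ->|a b c _ -> _ ->] //.
Qed.

Lemma eqv_size p q : eqv p q -> size p.2 = size q.2.
Proof.
elim=> [a b /ystep_size|a|a b _ ->|a b c _ -> _ ->] //.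
Qed.

Lemma eqv_ptgt p q : eqv p q -> ptgt p = ptgt q.
Proof.
elim=> [a b /ystep_ptgt|a|a b _ ->|a b c _ -> _ ->] //.
Qed.

Lemma eqv_valid p q : eqv p q -> (valid p <-> valid q).
Proof.
elim=> [a b /ystep_valid|a|a b _ ->|a b c _ -> _ ->] //.
Qed.

Lemma eqv_refl p : eqv p p. Proof. exact: rst_refl. Qed.
Lemma eqv_sym p q : eqv p q -> eqv q p. Proof. exact: rst_sym. Qed.
Lemma eqv_trans p q r : eqv p q -> eqv q r -> eqv p r. Proof. exact: rst_trans. Qed.

Lemma eqv_catl w m p q : eqv p q -> eqv (w, m ++ p.2) (w, m ++ q.2).
Proof.
elim=> [a b|a|a b _ IH|a b c _ IH1 _ IH2].
- case=> _ [l1 [l2 [x [y [hxy [E1 E2]]]]]]. apply: rst_step; split=> //.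
  exists (m ++ l1), l2, x, y. by rewrite /= E1 E2 !catA.
- exact: rst_refl.
- exact: rst_sym.
- exact: rst_trans IH2.
Qed.

Lemma eqv_catr m p q : eqv p q -> eqv (p.1, p.2 ++ m) (q.1, q.2 ++ m).
Proof.
elim=> [a b|a|a b _ IH|a b c _ IH1 _ IH2].
- case=> E0 [l1 [l2 [x [y [hxy [E1 E2]]]]]]. apply: rst_step; split=> //.
  exists l1, (l2 ++ m), x, y. by rewrite /= E1 E2 -!catA.
- exact: rst_refl.
- exact: rst_sym.
- exact: rst_trans IH2.
Qed.

Lemma catE T : @cat T = @app T. Proof. reflexivity. Qed.
Lemma mapE T U : @seq.map T U = @List.map T U. Proof. reflexivity. Qed.
Definition eqd (x y : A) : {x = y} + {x <> y} := excluded_middle_informative (x = y).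
Definition cnt (l : seq A) (a : A) : nat := count_occ eqd l a.
Arguments cnt : simpl never.
Definition meq (l m : seq A) := forall a, cnt l a = cnt m a.
Definition msub (l m : seq A) := forall a, le (cnt l a) (cnt m a).
Definition nd (l : seq A) := forall a, le (cnt l a) 1.
Fixpoint allp (P : A -> Prop) (l : seq A) : Prop :=
  if l is x :: l' then P x /\ allp P l' else True.

Lemma cnt_nil a : cnt [::] a = 0. Proof. by []. Qed.
Lemma cnt_cons b l a : cnt (b :: l) a = (if eqd b a then 1 else 0) + cnt l a.
Proof. rewrite /cnt /=. by case: (eqd b a). Qed.
Lemma cnt_cat l1 l2 a : cnt (l1 ++ l2) a = cnt l1 a + cnt l2 a.
Proof. elim: l1 => [|b l IH]; first by []. rewrite cat_cons !cnt_cons IH; case: eqd => ?; lia. Qed.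
Lemma cnt_self b l : cnt (b :: l) b = (cnt l b).+1.
Proof. rewrite cnt_cons; case: eqd => //. Qed.
Lemma cnt_other b l a : b <> a -> cnt (b :: l) a = cnt l a.
Proof. rewrite cnt_cons; case: eqd => //. Qed.

Lemma meq_perm l m : meq l m <-> Permutation l m.
Proof. rewrite /meq /cnt. split; [move=> H; apply/(Permutation_count_occ eqd)|move/(Permutation_count_occ eqd)]; by []. Qed.

Lemma meq_map f l m : meq l m -> meq (map f l) (map f m).
Proof. move/meq_perm=> H. apply/meq_perm. rewrite !mapE. exact: Permutation_map. Qed.

Lemma allp_cnt P l : allp P l <-> (forall a, 0 < cnt l a -> P a).
Proof.
elim: l => [|b l IH] /=; first by split=> // _ a; rewrite cnt_nil.
rewrite IH; split.
- case=> Pb H a; rewrite cnt_cons; case: eqd => [E|E] /=; first by rewrite -E.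
  by move/H.
- move=> H; split; first by apply: H; rewrite cnt_self.
  move=> a ha; apply: H; rewrite cnt_cons; lia.
Qed.

Lemma allp_map P f l : allp P (map f l) <-> allp (fun x => P (f x)) l.
Proof. elim: l => //= b l ->. by []. Qed.

Lemma allp_impl (P Q : A -> Prop) l : (forall x, P x -> Q x) -> allp P l -> allp Q l.
Proof. move=> H; elim: l => //= b l IH [/H ? /IH]; by []. Qed.

Lemma allp_cat P l m : allp P (l ++ m) <-> allp P l /\ allp P m.
Proof. elim: l => [|b l IH] /=; [tauto| rewrite IH; tauto]. Qed.

Lemma map_ext_allp (f g : A -> A) l : allp (fun x => f x = g x) l -> map f l = map g l.
Proof. elim: l => //= b l IH [-> /IH ->]. by []. Qed.

Lemma cnt_map_pos f l b : 0 < cnt (map f l) b -> exists a, 0 < cnt l a /\ f a = b.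
Proof.
elim: l => [|x l IH] /=; first by rewrite cnt_nil.
rewrite cnt_cons; case: eqd => [E|E] /=.
- by move=> _; exists x; rewrite cnt_self.
- move=> /IH [a [ha <-]].
- exists a; split=> //; rewrite cnt_cons; lia.
Qed.

Lemma cnt_map_pos2 f l a : 0 < cnt l a -> 0 < cnt (map f l) (f a).
Proof.
elim: l => [|x l IH] /=; first by rewrite cnt_nil.
rewrite cnt_cons; case: eqd => [E|E] /=; first by rewrite -E cnt_self.
move/IH=> h. rewrite cnt_cons; lia.
Qed.

Lemma cnt_map_inj (D : A -> Prop) f l a : allp D l -> D a ->
  (forall x y, D x -> D y -> f x = f y -> x = y) -> cnt (map f l) (f a) = cnt l a.
Proof.
move=> + Da inj; elim: l => [|x l IH] //= [Dx /IH {}IH].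
rewrite !cnt_cons IH. case: (eqd x a) => [E|E] /=.
- by subst; case: eqd.
- case: eqd => //= /(inj _ _ Dx Da). by [].
Qed.

Lemma cnt_pos_split l a : 0 < cnt l a -> exists l1 l2, l = l1 ++ a :: l2.
Proof.
elim: l => [|x l IH]; first by rewrite cnt_nil.
rewrite cnt_cons; case: eqd => [E|E] /=.
- by move=> _; exists [::], l; rewrite E.
- by move/IH => [l1 [l2 ->]]; exists (x :: l1), l2.
Qed.

Lemma msub_ex l m : msub l m -> exists d, meq m (l ++ d).
Proof.
elim: l m => [|a l IH] m H; first by exists m.
have: 0 < cnt m a by have := H a; rewrite cnt_self; lia.
case/cnt_pos_split=> m1 [m2 E]; subst m.
have [d Hd] : exists d, meq (m1 ++ m2) (l ++ d).
  apply: IH => b; have := H b; rewrite !cnt_cat !cnt_cons; case: eqd; lia.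
exists d => b; have := Hd b; rewrite !cnt_cat !cnt_cons; lia.
Qed.

Lemma meq_nil_inv m : meq [::] m -> m = [::].
Proof. case: m => // b m /(_ b); by rewrite cnt_self cnt_nil. Qed.

Lemma YB1 x y z : tgt x = src y -> tgt y = src z ->
  L (L x y) (L (R x y) z) = L x (L y z).
Proof.
move=> h1 h2; case: HYB => _ /(_ x y z h1 h2).
rewrite /s12 /s23 /=.
case E1 : (sigma x y) => [a b] /=.
case E2 : (sigma b z) => [c d] /=.
case E3 : (sigma a c) => [e f] /=.
case E4 : (sigma y z) => [g k] /=.
case E5 : (sigma x g) => [m n] /=.
case E6 : (sigma n k) => [o p] /=.
by case.
Qed.

Lemma linj x y y' : tgt x = src y -> tgt x = src y' -> L x y = L x y' -> y = y'.
Proof.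
move=> h h' E. case: Hnd => [H _].
have hs : src (L x y) = src x by case: (typ h).
case: (H x (L x y) hs) => y0 [_ U].
by rewrite -(U y) // -(U y') //; split.
Qed.

Definition linv (x u : A) : A :=
  match excluded_middle_informative (src u = src x) with
  | left h => proj1_sig (constructive_indefinite_description _
               (match Hnd.1 x u h with ex_intro y (conj P _) => ex_intro _ y P end))
  | right _ => u
  end.

Lemma linv_spec x u : src u = src x -> src (linv x u) = tgt x /\ L x (linv x u) = u.
Proof.
rewrite /linv => h; case: excluded_middle_informative => // h'.
by case: constructive_indefinite_description.
Qed.

Lemma fixed_pair x b : tgt x = src b -> L x b = x -> sigma x b = (x, b).
Proof.
move=> h E. have Hi := Hinv h. rewrite E in Hi.
case: (typ h) => _ h2 _. rewrite E in h2.
have Ec : R x b = b.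
  apply: (linj h2 h). by rewrite Hi.
by rewrite [sigma x b]surjective_pairing E Ec.
Qed.

Fixpoint pi (l : seq A) : seq A := if l is x :: l' then x :: map (fun z => L x z) (pi l') else [::].
Definition pact (l : seq A) (y : A) : A := foldr (fun x acc => L x acc) y l.

Lemma pi_size l : size (pi l) = size l.
Proof. by elim: l => //= x l <-; rewrite size_map. Qed.

Lemma pi_cat l1 l2 : pi (l1 ++ l2) = pi l1 ++ map (pact l1) (pi l2).
Proof.
elim: l1 => //= [|x l1 ->]; first by rewrite map_id.
by rewrite map_cat -map_comp.
Qed.

Lemma pi_src v l : vf v l -> allp (fun a => src a = v) (pi l).
Proof.
elim: l v => //= x l IH v [hx /IH H]; split=> //.
apply/allp_map; apply: allp_impl H => a ha.
by case: (typ (esym ha)) => ->.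
Qed.

Lemma pact_src v l y : vf v l -> src y = last v (map tgt l) -> src (pact l y) = v.
Proof.
elim: l v => //= x l IH v [hx hl] hy.
have := IH _ hl hy => h. by case: (typ (esym h)) => -> _ _.
Qed.

Fixpoint pinv (l : seq A) (u : A) : A := if l is x :: l' then pinv l' (linv x u) else u.

Lemma pinv_spec v l u : vf v l -> src u = v ->
  src (pinv l u) = last v (map tgt l) /\ pact l (pinv l u) = u.
Proof.
elim: l v u => //= x l IH v u [hx hl] hu.
have [h1 h2] := linv_spec (etrans hu (esym hx)).
have [h3 h4] := IH _ _ hl h1. split=> //. by rewrite h4.
Qed.

Lemma pi_ystep p q : ystep p q -> valid p -> meq (pi p.2) (pi q.2).
Proof.
case: p q => [v l] [w l'] [/= _ [l1 [l2 [x [y [hxy [-> ->]]]]]]].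
rewrite /Defs.valid /= vf_cat /= => [[_ [_ [_ hl2]]]].
rewrite !pi_cat. move=> a; rewrite !cnt_cat; congr (_ + _).
apply: meq_map. move=> {}a /=.
have Hi := Hinv hxy.
rewrite Hi.
rewrite -!map_comp.
have -> : map ((fun z => L (L x y) z) \o (fun z => L (R x y) z)) (pi l2) = map ((fun z => L x z) \o (fun z => L y z)) (pi l2).
  apply: map_ext_allp. apply: allp_impl (pi_src hl2) => z hz /=.
  by rewrite YB1 // hz.
rewrite !cnt_cons. by do 2 case: eqd => ? /=; lia.
Qed.

Lemma eqv_pi p q : eqv p q -> valid p -> meq (pi p.2) (pi q.2).
Proof.
elim=> [a b /pi_ystep //|a _ ?|a b E IH hb|a b c E1 IH1 E2 IH2 ha] //.
- move=> c. have ha : valid a by apply/(eqv_valid E).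
  by rewrite (IH ha).
- have hb : valid b by apply/(eqv_valid E1).
  move=> z; by rewrite (IH1 ha) (IH2 hb).
Qed.

Lemma mem_pi_head v l a : vf v l -> 0 < cnt (pi l) a -> exists l', eqv (v, l) (v, a :: l').
Proof.
elim: l v a => [|x l IH] v a /=; first by rewrite cnt_nil.
move=> [hx hl]. rewrite cnt_cons. case: eqd => [E|E] /=.
- move=> _; exists l; rewrite -E; exact: eqv_refl.
- move=> /cnt_map_pos [b [hb Eb]].
  have [r Hr] := IH _ _ hl hb.
  have hsb : src b = tgt x by have := (proj1 (allp_cnt _ _) (pi_src hl)) b hb.
  exists (R x b :: r).
  apply: eqv_trans (eqv_catl v [:: x] Hr) _ => /=.
  apply: rst_step; split=> //. exists [::], r, x, b.
  split; first by rewrite hsb. by rewrite Eb.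
Qed.

Lemma pi_inj v l l' : vf v l -> vf v l' -> meq (pi l) (pi l') -> eqv (v, l) (v, l').
Proof.
elim: l v l' => [|x m IH] v l' hl hl' H.
- have := meq_nil_inv H. move/(congr1 size); rewrite pi_size.
  case: l' {hl' H} => // _; exact: eqv_refl.
- case: l' hl' H => [|x' m'] hl' H.
  + by have := H x; rewrite cnt_nil /= cnt_self.
  case: hl => hx hm. case: hl' => hx' hm'.
  have [m'' [E1 hm'']] : exists m'', eqv (v, x' :: m') (v, x :: m'') /\ vf (tgt x) m''.
    case: (eqd x' x) => [Ex|Ex].
    + subst x'. exists m'; split=> //; exact: eqv_refl.
    + have : 0 < cnt (pi (x' :: m')) x by rewrite -H; simpl pi; rewrite cnt_self.
      simpl pi; rewrite cnt_other // => /cnt_map_pos [b [hb Eb]].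
      have [r Hr] := mem_pi_head hm' hb.
      have hsb : src b = tgt x' by have := (proj1 (allp_cnt _ _) (pi_src hm')) b hb.
      have E2 : eqv (v, x' :: m') (v, x :: R x' b :: r).
        apply: eqv_trans (eqv_catl v [:: x'] Hr) _ => /=.
        apply: rst_step; split=> //. exists [::], r, x', b.
        split; first by rewrite hsb. by rewrite Eb.
      exists (R x' b :: r); split=> //.
      have : valid (v, x :: R x' b :: r) by apply/(eqv_valid E2); split.
      by case.
  have hv' : valid (v, x' :: m') by split.
  have H2 : meq (pi (x :: m)) (pi (x :: m'')).
    move=> a; rewrite H; exact: (eqv_pi E1 hv' a).
  have H3 : meq (pi m) (pi m'').
    move=> a. case: (excluded_middle_informative (src a = tgt x)) => [Ea|Ea].
    + have := H2 (L x a). simpl pi. rewrite !cnt_cons.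
      rewrite (cnt_map_inj (D := fun z => src z = tgt x)) //; last first.
        move=> y z hy hz; apply: linj; by rewrite ?hy ?hz.
        exact: pi_src.
      rewrite (cnt_map_inj (D := fun z => src z = tgt x)) //; last first.
        move=> y z hy hz; apply: linj; by rewrite ?hy ?hz.
        exact: pi_src.
      lia.
    + have Z : forall l0, vf (tgt x) l0 -> cnt (pi l0) a = 0.
        move=> l0 h0. case E0: (cnt (pi l0) a) => [|k] //.
        have : 0 < cnt (pi l0) a by rewrite E0.
        by move/(proj1 (allp_cnt _ _) (pi_src h0)).
      by rewrite !Z.
  have E3 := IH _ _ hm hm'' H3.
  exact: eqv_trans (eqv_catl v [:: x] E3) (eqv_sym E1).
Qed.

Lemma pi_surj v M : allp (fun a => src a = v) M -> exists l, vf v l /\ meq (pi l) M.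
Proof.
have [n hn] : exists n, (size M <= n)%coq_nat by exists (size M).
elim: n M v hn => [|n IH] [|a M] v hn //=; try by exists [::].
  by simpl in hn; lia.
case=> ha hM.
have hM' : allp (fun u => src u = tgt a) (map (linv a) M).
  apply/allp_map; apply: allp_impl hM => u hu.
  by case: (linv_spec (etrans hu (esym ha))).
have hn' : (size (map (linv a) M) <= n)%coq_nat by rewrite size_map; simpl in hn; lia.
have [m [hm Hm]] := IH _ _ hn' hM'.
exists (a :: m); split; first by split.
move=> b. simpl pi. rewrite !cnt_cons. congr (_ + _).
rewrite (meq_map _ Hm b) -map_comp (map_ext_allp (g := id)) ?map_id //.
apply: allp_impl hM => u hu /=. by case: (linv_spec (etrans hu (esym ha))).
Qed.

Lemma ldiv_pi f g : ldiv src tgt sigma f g ->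
  [/\ valid f, valid g, f.1 = g.1 & msub (pi f.2) (pi g.2)].
Proof.
case=> hf hg [h [hh hs E]]. split=> //.
- by have := eqv_fst E.
- have hc : valid (comp f h).
    rewrite /Defs.valid /comp /= vf_cat. split=> //.
    rewrite /psrc /Defs.ptgt in hs. rewrite -hs. exact: hh.
  move=> a. have := eqv_pi E hc a. rewrite /comp /= pi_cat cnt_cat => <-. lia.
Qed.

Lemma pi_ldiv f g : valid f -> valid g -> f.1 = g.1 -> msub (pi f.2) (pi g.2) ->
  ldiv src tgt sigma f g.
Proof.
case: f g => [v fl] [w gl] /= hf hg Evw H. subst w.
have [d Hd] := msub_ex H.
have hd : allp (fun a => src a = v) d.
  apply/allp_cnt => a ha. have : 0 < cnt (pi gl) a by rewrite Hd cnt_cat; lia.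
  by move/(proj1 (allp_cnt _ _) (pi_src hg)).
set e := last v (map tgt fl).
have hd' : allp (fun a => src a = e) (map (pinv fl) d).
  apply/allp_map; apply: allp_impl hd => a ha. by case: (pinv_spec hf ha).
have [hl [hhl Hhl]] := pi_surj hd'.
split=> //. exists (e, hl). split=> //.
apply: pi_inj; first by rewrite vf_cat; split.
  exact: hg.
move=> a. rewrite pi_cat cnt_cat Hd cnt_cat. congr (_ + _).
rewrite (meq_map _ Hhl a) -map_comp (map_ext_allp (g:=id)) ?map_id //.
apply: allp_impl hd => b hb /=. by case: (pinv_spec hf hb).
Qed.

Lemma cnt_filter (P : pred A) l a : cnt (filter P l) a = if P a then cnt l a else 0.
Proof.
elim: l => [|b l IH] /=; first by case: (P a).
case Pb: (P b).
- rewrite !cnt_cons IH. case: eqd => [E|E] /=; first by subst; rewrite Pb.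
  by [].
- rewrite cnt_cons IH. case: eqd => [E|E] /=; first by subst; rewrite Pb.
  by [].
Qed.

Lemma allp_filter P (Q : pred A) l : allp P l -> allp P (filter Q l).
Proof. elim: l => //= b l IH [Pb /IH H]; case: (Q b) => //. Qed.

Lemma cmul f g : valid f -> valid g -> f.1 = g.1 -> nd (pi f.2) -> nd (pi g.2) ->
  exists m, [/\ valid m, ldiv src tgt sigma f m, ldiv src tgt sigma g m & nd (pi m.2)].
Proof.
move=> hf hg E nf ng.
set U := pi f.2 ++ filter (fun a => cnt (pi f.2) a == 0) (pi g.2).
have hU : allp (fun a => src a = f.1) U.
  apply/allp_cat; split; first exact: pi_src.
  apply: allp_filter. rewrite E. exact: pi_src.
have [ml [hml Hml]] := pi_surj hU.
have hm : valid (f.1, ml) by [].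
exists (f.1, ml); split=> //.
- apply: pi_ldiv => // a /=. rewrite Hml /U cnt_cat. lia.
- apply: pi_ldiv => // a /=. have := nf a; have := ng a.
  rewrite Hml /U cnt_cat cnt_filter. case: eqP => ? ; lia.
- move=> a /=. have := nf a; have := ng a.
  rewrite Hml /U cnt_cat cnt_filter. case: eqP => ? ; lia.
Qed.

Definition fixrep (p : qp) := exists l1 l2 x y,
  [/\ eqv p (p.1, l1 ++ x :: y :: l2), tgt x = src y & sigma x y = (x, y)].

Lemma fixrep_nd p : valid p -> fixrep p -> ~ nd (pi p.2).
Proof.
move=> hp [l1 [l2 [x [y [E hxy Hs]]]]] N.
have H := eqv_pi E hp.
have := N (pact l1 x). rewrite H /= pi_cat cnt_cat.
simpl pi. rewrite Hs /=.
simpl map. rewrite !cnt_self. lia.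
Qed.

Lemma nd_fixrep v l : vf v l -> ~ nd (pi l) -> fixrep (v, l).
Proof.
elim: l v => [|x m IH] v hl N.
- exfalso; apply: N => a; rewrite cnt_nil; lia.
- case: hl => hx hm.
  have [a Ha] : exists a, lt 1 (cnt (pi (x :: m)) a).
    case: (classic (exists a, lt 1 (cnt (pi (x :: m)) a))) => // C.
    exfalso; apply: N => a.
    have : ~ lt 1 (cnt (pi (x :: m)) a) by move=> h; apply: C; exists a.
    lia.
  move: Ha. simpl pi. rewrite cnt_cons. case: eqd => [Ex|Ex] /= Ha.
  + subst a. have : 0 < cnt (map (fun z => L x z) (pi m)) x by lia.
    case/cnt_map_pos=> b [hb Eb].
    have hsb : src b = tgt x by have := (proj1 (allp_cnt _ _) (pi_src hm)) b hb.
    have [r Hr] := mem_pi_head hm hb.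
    exists [::], r, x, b. split.
    * exact: (eqv_catl v [:: x] Hr).
    * by rewrite hsb.
    * by apply: fixed_pair; rewrite ?hsb.
  + have [b Hb] : exists b, lt 1 (cnt (pi m) b).
      have : 0 < cnt (map (fun z => L x z) (pi m)) a by lia.
      case/cnt_map_pos=> b [hb Eb]. exists b.
      have hsb : src b = tgt x by have := (proj1 (allp_cnt _ _) (pi_src hm)) b hb.
      rewrite -(cnt_map_inj (D := fun z => src z = tgt x) (f := fun z => L x z)) //.
      * by rewrite Eb.
      * exact: pi_src.
      * move=> y z hy hz; apply: linj; by rewrite ?hy ?hz.
    have N' : ~ nd (pi m) by move=> H; have := H b; lia.
    have [l1 [l2 [y [z [E hyz Hs]]]]] := IH _ hm N'.
    exists (x :: l1), l2, y, z. split=> //.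
    exact: (eqv_catl v [:: x] E).
Qed.

Local Notation rc := (rlcm_closure src tgt sigma).

Lemma pi1 x : pi [:: x] = [:: x]. Proof. by []. Qed.

Lemma rc_nd p : rc p -> valid p /\ nd (pi p.2).
Proof.
elim=> [x q hq E | f g h _ [hf nf] _ [hg ng] [Hfh Hgh Hmin]].
- split=> // a. rewrite (eqv_pi E hq a) /= ?pi1 cnt_cons cnt_nil. case: eqd => ? /=; lia.
- have [_ hh E1 _] := ldiv_pi Hfh. have [_ _ E2 _] := ldiv_pi Hgh.
  have [m [hm Hfm Hgm nm]] := cmul hf hg (etrans E1 (esym E2)) nf ng.
  have [_ _ _ Hs] := ldiv_pi (Hmin _ Hfm Hgm).
  split=> // a. have := Hs a; have := nm a; lia.
Qed.

Lemma meq_size l m : meq l m -> size l = size m.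
Proof. move/meq_perm/Permutation_length. by []. Qed.

Lemma size_cnt l a : 0 < cnt l a -> 0 < size l.
Proof. by case: l. Qed.

Lemma nd_rc n p : (size p.2 <= n)%coq_nat -> valid p -> nd (pi p.2) -> 0 < size p.2 -> rc p.
Proof.
elim: n p => [|n IH] [v l] /= hn hp np hs; first by lia.
case El : (pi l) => [|a Rl]; first by move: hs; rewrite -pi_size El.
have hsrc := pi_src hp. rewrite El /= in hsrc. case: hsrc => ha hR.
case: Rl El hR => [|b Rl] El hR.
- case: l El hp np hs hn => [|x [|y l]] //= El hp np hs hn.
  apply: (rc_gen (x := x)) => //.
  rewrite /arrow_path. case: hp => /= E _. rewrite E. exact: eqv_refl.
- set Rl' := b :: Rl in El hR.
  have [l2 [hl2 Hl2]] := pi_surj hR.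
  have npR : nd (pi l) := np.
  rewrite El in np.
  have ndR : nd Rl' by move=> c; have := np c; rewrite cnt_cons; lia.
  have hg1 : valid (v, [:: a]) by rewrite /Defs.valid /=; split.
  have hg2 : valid (v, l2) := hl2.
  apply: (rc_lcm (f := (v, [:: a])) (g := (v, l2))).
  + apply: (rc_gen (x := a)) => //. rewrite /arrow_path ha. exact: eqv_refl.
  + apply: IH => //=.
    * have := meq_size Hl2; rewrite pi_size => ->.
      have := congr1 size El; rewrite pi_size /= => E. lia.
    * move=> c; rewrite Hl2; exact: ndR.
    * rewrite -pi_size (meq_size Hl2) /Rl' /=. by [].
  + split.
    * apply: pi_ldiv => // c /=. rewrite El ?pi1 !cnt_cons cnt_nil. lia.
    * apply: pi_ldiv => // c /=. rewrite El Hl2 cnt_cons. lia.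
    * move=> h' /ldiv_pi [_ hh' E1 S1] /ldiv_pi [_ _ E2 S2].
      apply: pi_ldiv => // c /=. rewrite El.
      have := S1 c; have := S2 c; have := np c. rewrite /= Hl2 ?pi1.
      rewrite !cnt_cons cnt_nil. case: eqd => [Ec|Ec] /=; lia.
Qed.

Lemma pact_cat l1 l2 y : pact (l1 ++ l2) y = pact l1 (pact l2 y).
Proof. by rewrite /pact foldr_cat. Qed.

Lemma greedy_ok s1 s2 : valid s1 -> valid s2 -> psrc s2 = ptgt s1 ->
  allp (fun b => 0 < cnt (pi s1.2) (pact s1.2 b)) (pi s2.2) ->
  greedy src tgt sigma rc s1 s2.
Proof.
move=> h1 h2 e12 Hin s f Hs hf ef Hd.
have [hs ns] := rc_nd Hs.
have [_ _ Es Hsub] := ldiv_pi Hd.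
have hfs1 : valid (comp f s1).
  rewrite /Defs.valid /comp /= vf_cat. split=> //.
  rewrite /psrc /Defs.ptgt in ef. rewrite ef. exact: h1.
apply: pi_ldiv => //.
move=> a. have := Hsub a. have := ns a. rewrite /comp /= !pi_cat !cnt_cat.
case E0 : (cnt (map (pact (f.2 ++ s1.2)) (pi s2.2)) a) => [|k]; first by lia.
have : 0 < cnt (map (pact (f.2 ++ s1.2)) (pi s2.2)) a by rewrite E0.
case/cnt_map_pos=> b [hb Eb].
have := (proj1 (allp_cnt _ _) Hin) b hb => /= hb1.
have := cnt_map_pos2 (pact f.2) hb1. rewrite -pact_cat Eb. lia.
Qed.

Fixpoint dd (l : seq A) : seq A :=
  if l is a :: l' then (if cnt (dd l') a == 0 then a :: dd l' else dd l') else [::].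

Lemma dd_cnt l a : cnt (dd l) a = if 0 < cnt l a then 1 else 0.
Proof.
elim: l => [|b l IH] //=.
case: eqP => Eb.
- rewrite cnt_cons IH cnt_cons. case: eqd => [E|E] /=.
  + subst b. rewrite IH in Eb. move: Eb. case: (0 < cnt l a) => //.
  + by [].
- rewrite IH cnt_cons. case: eqd => [E|E] /=.
  + subst b. rewrite IH in Eb. move: Eb. case: (0 < cnt l a) => //.
  + by [].
Qed.

Lemma ptgt_comp f h : psrc h = ptgt f -> ptgt (comp f h) = ptgt h.
Proof.
rewrite /psrc /Defs.ptgt /comp /= map_cat last_cat => ->. by [].
Qed.

Lemma garside_ex n g : (size g.2 <= n)%coq_nat -> valid g -> exists ss,
  [/\ pchain src tgt (psrc g) ss (ptgt g),
      (forall s, List.In s ss -> [/\ valid s, nd (pi s.2) & 0 < size s.2]),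
      greedy_chain src tgt sigma rc ss &
      eqv (eval_from (psrc g) ss) g].
Proof.
elim: n g => [|n IH] [v l] /= hn hg.
- case: l hn hg => [|x l] /= hn hg; last by lia.
  exists [::]; split=> //. exact: eqv_refl.
case: l hn hg => [|x l] hn hg.
  exists [::]; split=> //. exact: eqv_refl.
set M := pi (x :: l).
have hM := pi_src hg.
have hD : allp (fun a => src a = v) (dd M).
  apply/allp_cnt => a. rewrite dd_cnt. case E: (0 < cnt M a) => // _.
  exact: (proj1 (allp_cnt _ _) hM).
have [l1 [hl1 Hl1]] := pi_surj hD.
have Hd : ldiv src tgt sigma (v, l1) (v, x :: l).
  apply: pi_ldiv => // a. change (le (cnt (pi l1) a) (cnt M a)).
  rewrite Hl1 dd_cnt. case: ltP => ?; lia.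
case: Hd => _ _ [h [hh hsh Eh]].
have Sz := eqv_size Eh. rewrite /comp /= size_cat in Sz.
have S1 : 0 < size l1.
  rewrite -pi_size (meq_size Hl1). apply: (size_cnt (a := x)).
  rewrite dd_cnt /M /= cnt_self. by [].
have hz : (size h.2 <= n)%coq_nat by simpl in hn; lia.
have [ss [Hc Hm Hgc He]] := IH h hz hh.
exists ((v, l1) :: ss). split.
- split=> //. rewrite -hsh.
  have -> : ptgt (v, x :: l) = ptgt h.
    rewrite -(eqv_ptgt Eh). apply: ptgt_comp. exact: hsh.
  exact: Hc.
- move=> s /= [<-|/Hm //]. split=> //=.
  move=> a. rewrite Hl1 dd_cnt. case: ltP => _; lia.
- case: ss Hc Hm Hgc He => [|s2 rest] Hc Hm Hgc He; first by [].
  split=> //.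
  case: Hc => hs2 ps2 _.
  apply: greedy_ok => //; first by rewrite ps2.
  apply/allp_cnt => b hb /=.
  have hev : valid (eval_from (psrc h) (s2 :: rest)) by apply/(eqv_valid He).
  have := eqv_pi He hev b. rewrite /eval_from /= pi_cat cnt_cat => Eb.
  have hbh : 0 < cnt (pi h.2) b by lia.
  have hcomp : valid (comp (v, l1) h).
    rewrite /Defs.valid /comp /= vf_cat. split=> //. have e : h.1 = last v (map tgt l1) := hsh. rewrite -e. exact: hh.
  have := eqv_pi Eh hcomp (pact l1 b). change (pi (v, x :: l).2) with M.
  rewrite [pi (comp _ _).2]/= pi_cat cnt_cat.
  have := cnt_map_pos2 (pact l1) hbh.
  rewrite Hl1 dd_cnt. case: (@ltP 0 (cnt M (pact l1 b))) => ?; lia.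
- rewrite /eval_from /=. 
  apply: eqv_trans _ Eh. rewrite /comp /=.
  exact: (eqv_catl v l1 He).
Qed.

End Gen.
Definition dsig (A : Type) (s : A -> A -> A * A) : A -> A -> A * A :=
  fun y x => ((s x y).2, (s x y).1).

Lemma dsigK (A : Type) (s : A -> A -> A * A) : dsig (dsig s) = s.
Proof.
apply: functional_extensionality => x; apply: functional_extensionality => y.
rewrite /dsig /=. by case: (s x y).
Qed.

Definition dualp (V A : Type) (tgt : A -> V) (p : qpath V A) : qpath V A :=
  (ptgt tgt p, rev p.2).

Section Dual.
Variables (V A : Type) (src tgt : A -> V) (sigma : A -> A -> A * A).
Hypothesis HYB : qYB_map src tgt sigma.
Hypothesis Hinv : involutive_qYB src tgt sigma.
Hypothesis Hnd : nondegenerate_qYB src tgt sigma.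

Local Notation L x y := (sigma x y).1.
Local Notation R x y := (sigma x y).2.

Definition rv (w : A * A * A) : A * A * A := let: (a, b, c) := w in (c, b, a).
Lemma s12d (w : A * A * A) : s12 (dsig sigma) (rv w) = rv (s23 sigma w).
Proof. by case: w => [[a b] c]. Qed.
Lemma s23d (w : A * A * A) : s23 (dsig sigma) (rv w) = rv (s12 sigma w).
Proof. by case: w => [[a b] c]. Qed.

Lemma dual_YB : qYB_map tgt src (dsig sigma).
Proof.
case: HYB => Ht Hb. split.
- move=> y x h. case: (Ht x y (esym h)) => h1 h2 h3. by split; rewrite /dsig /=.
- move=> z y x h1 h2.
  change (z, y, x) with (rv (x, y, z)).
  rewrite s12d s23d s12d s23d s12d s23d.
  by rewrite (Hb x y z (esym h2) (esym h1)).
Qed.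

Lemma dual_inv : involutive_qYB tgt src (dsig sigma).
Proof.
move=> y x h. rewrite /dsig /=. by rewrite (Hinv (esym h)).
Qed.

Lemma dual_nd : nondegenerate_qYB tgt src (dsig sigma).
Proof.
case: Hnd => H1 H2. split.
- move=> y u h. exact: (H2 y u h).
- move=> x w h. exact: (H1 x w h).
Qed.

Lemma vf_rev v l : valid_from src tgt v l ->
  valid_from tgt src (last v (map tgt l)) (rev l) /\
  last (last v (map tgt l)) (map src (rev l)) = v.
Proof.
elim: l v => [|x l IH] v //= [hx hl].
have [h1 h2] := IH _ hl.
rewrite rev_cons -cats1 vf_cat map_cat last_cat /=.
by rewrite h2 hx.
Qed.

Lemma dual_valid p : valid src tgt p -> valid tgt src (dualp tgt p).
Proof. by case: p => v l /vf_rev []. Qed.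

Lemma dualpK p : valid src tgt p -> dualp src (dualp tgt p) = p.
Proof.
case: p => v l /vf_rev [_ h]. rewrite /dualp /Defs.ptgt /= revK.
by rewrite h.
Qed.

Lemma rev4 (l1 l2 : seq A) x y : rev (l1 ++ x :: y :: l2) = rev l2 ++ y :: x :: rev l1.
Proof. by rewrite rev_cat !rev_cons -!cats1 -!catA. Qed.

Lemma ystep_dual p q : ystep src tgt sigma p q ->
  ystep tgt src (dsig sigma) (dualp tgt p) (dualp tgt q).
Proof.
move=> H. have Ht := ystep_ptgt HYB H.
case: H => _ [l1 [l2 [x [y [hxy [E1 E2]]]]]].
split; first exact: Ht.
exists (rev l2), (rev l1), y, x. split; first by [].
rewrite /dualp /= E1 E2 !rev4. by split.
Qed.

Lemma eqv_dual p q : eqv src tgt sigma p q ->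
  eqv tgt src (dsig sigma) (dualp tgt p) (dualp tgt q).
Proof.
elim=> [a b /ystep_dual|a|a b _ IH|a b c _ IH1 _ IH2].
- exact: rst_step.
- exact: rst_refl.
- exact: rst_sym.
- exact: rst_trans IH2.
Qed.

Lemma fixrep_dual p : fixrep src tgt sigma p ->
  fixrep tgt src (dsig sigma) (dualp tgt p).
Proof.
case=> l1 [l2 [x [y [E hxy Hs]]]].
have E' := eqv_dual E. have Ht := eqv_ptgt HYB E.
exists (rev l2), (rev l1), y, x. split.
- rewrite /dualp /= rev4 -Ht in E'. exact: E'.
- by [].
- by rewrite /dsig Hs.
Qed.

Lemma ldiv_dual p m : ldiv src tgt sigma p m ->
  rdiv tgt src (dsig sigma) (dualp tgt p) (dualp tgt m).
Proof.
case=> hp hm [h [hh hs E]].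
split; try exact: dual_valid.
exists (dualp tgt h). split.
- exact: dual_valid.
- rewrite /Defs.ptgt. have [_ ->] := vf_rev hh. exact: hs.
- have := eqv_dual E. rewrite /dualp /comp /= rev_cat (ptgt_comp hs). by [].
Qed.

End Dual.
Section SQ.
Variables (V A : Type) (src tgt : A -> V) (sigma : A -> A -> A * A).
Hypothesis HYB : qYB_map src tgt sigma.
Hypothesis Hinv : involutive_qYB src tgt sigma.
Hypothesis Hnd : nondegenerate_qYB src tgt sigma.

Lemma sqf_dual p : valid src tgt p -> nd (pi sigma p.2) ->
  nd (pi (dsig sigma) (dualp tgt p).2).
Proof.
move=> hp np. apply: NNPP => N.
have hv := dual_valid hp.
have F := nd_fixrep (dual_YB HYB) (dual_inv Hinv) (dual_nd Hnd) hv N.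
have F2 := fixrep_dual (dual_YB HYB) F.
rewrite dsigK (dualpK hp) in F2.
exact: (fixrep_nd HYB Hinv hp F2 np).
Qed.
End SQ.

Section Final.
Variables (V A : Type) (src tgt : A -> V) (sigma : A -> A -> A * A).
Hypothesis HYB : qYB_map src tgt sigma.
Hypothesis Hinv : involutive_qYB src tgt sigma.
Hypothesis Hnd : nondegenerate_qYB src tgt sigma.
Local Notation qp := (qpath V A).
Local Notation S := (rlcm_closure src tgt sigma).
Local Notation eqv := (eqv src tgt sigma).
Local Notation valid := (valid src tgt).
Local Notation rdiv := (rdiv src tgt sigma).
Local Notation is_llcm := (is_llcm src tgt sigma).
Local Notation sharp := (sharp src tgt sigma S).

Lemma sqf_undual m : Defs.valid tgt src m -> nd (pi (dsig sigma) m.2) ->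
  nd (pi sigma (dualp src m).2).
Proof.
move=> hm nm.
have := sqf_dual (dual_YB HYB) (dual_inv Hinv) (dual_nd Hnd) hm nm.
by rewrite dsigK.
Qed.

Lemma rdiv_ptgt s g : rdiv s g -> ptgt tgt s = ptgt tgt g.
Proof.
case=> _ _ [f [_ ef E]]. rewrite -(eqv_ptgt HYB E). rewrite ptgt_comp //.
Qed.

Lemma llcm_sqf s t h : valid s -> valid t -> nd (pi sigma s.2) -> nd (pi sigma t.2) ->
  is_llcm s t h -> valid h /\ nd (pi sigma h.2).
Proof.
move=> hs ht ns nt [Rs Rt Hmin].
have E12 : (dualp tgt s).1 = (dualp tgt t).1.
  rewrite /dualp /= (rdiv_ptgt Rs) (rdiv_ptgt Rt). by [].
have [m' [hm' Ls Lt nm']] := cmul (dual_YB HYB) (dual_inv Hinv) (dual_nd Hnd)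
   (dual_valid hs) (dual_valid ht) E12 (sqf_dual HYB Hinv Hnd hs ns) (sqf_dual HYB Hinv Hnd ht nt).
have Rs' := ldiv_dual (dual_YB HYB) Ls. rewrite dsigK (dualpK hs) in Rs'.
have Rt' := ldiv_dual (dual_YB HYB) Lt. rewrite dsigK (dualpK ht) in Rt'.
have Rh := Hmin _ Rs' Rt'.
have nm := sqf_undual hm' nm'.
move: (dualp src m') Rh nm => m Rh nm.
case: Rh => hh hm [f [hf ef E]].
split=> //. apply: NNPP => N.
have [l1 [l2 [x [y [Eh hxy Hs]]]]] := nd_fixrep HYB Hinv Hnd hh N.
apply: (fixrep_nd HYB Hinv hm _ nm).
exists (f.2 ++ l1), l2, x, y. split=> //.
have E1 := eqv_fst E. rewrite /comp /= in E1.
rewrite -E1. apply: eqv_trans (eqv_sym E) _.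
rewrite /comp -catA. exact: (eqv_catl f.1 f.2 Eh).
Qed.

Lemma rdiv_eqv1 s s' g : eqv s s' -> rdiv s g -> rdiv s' g.
Proof.
move=> Es [hs hg [f [hf ef E]]]. split=> //; first by apply/(eqv_valid HYB Es).
exists f; split=> //; first by rewrite ef /psrc (eqv_fst Es).
apply: eqv_trans _ E. rewrite /comp. exact: (eqv_catl f.1 f.2 (eqv_sym Es)).
Qed.

Lemma rdiv_eqv2 s g g' : eqv g g' -> rdiv s g -> rdiv s g'.
Proof.
move=> Eg [hs hg [f [hf ef E]]]. split=> //; first by apply/(eqv_valid HYB Eg).
exists f; split=> //. exact: eqv_trans E Eg.
Qed.

Lemma is_llcm_eqv s t h s' t' h' : eqv s s' -> eqv t t' -> eqv h h' ->
  is_llcm s t h -> is_llcm s' t' h'.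
Proof.
move=> Es Et Eh [Rs Rt Hm]. split.
- exact: rdiv_eqv2 Eh (rdiv_eqv1 Es Rs).
- exact: rdiv_eqv2 Eh (rdiv_eqv1 Et Rt).
- move=> k Rs' Rt'. apply: rdiv_eqv1 Eh _. apply: Hm.
  + exact: rdiv_eqv1 (eqv_sym Es) Rs'.
  + exact: rdiv_eqv1 (eqv_sym Et) Rt'.
Qed.

Lemma is_llcm_sym s t h : is_llcm s t h -> is_llcm t s h.
Proof. case=> a b c; split=> // k x y; exact: c. Qed.

Lemma llcm_uniq s t h1 h2 : is_llcm s t h1 -> is_llcm s t h2 -> eqv h1 h2.
Proof.
move=> [R1 R1' M1] [R2 R2' M2].
case: (M1 _ R2 R2') => _ _ [f [hf ef E]].
case: (M2 _ R1 R1') => _ _ [f' [hf' ef' E']].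
have S1 := eqv_size E. have S2 := eqv_size E'.
rewrite /comp /= !size_cat in S1 S2.
have f0 : f.2 = [::] by case: f.2 S1 S2 {E ef hf} => //= *; lia.
apply: (eqv_trans _ E). rewrite /comp f0 /=.
have -> : f.1 = h1.1.
  rewrite /psrc in ef. rewrite -ef /Defs.ptgt f0. by [].
move: (h1) => [? ?]. exact: eqv_refl.
Qed.

Lemma inv_nil e : invertible src tgt sigma e -> e.2 = [::].
Proof.
case=> _ [q [_ _ _ E _]]. have := eqv_size E. rewrite /comp /= size_cat.
by case: e.2 {E}.
Qed.

Lemma idp_inv v : invertible src tgt sigma (@idp V A v).
Proof.
split=> //. exists (@idp V A v). split=> //; exact: eqv_refl.
Qed.

Lemma sharp_iff g : sharp g <-> valid g /\ nd (pi sigma g.2).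
Proof.
split.
- case=> hg [[s [e [Hs hs' He hse E]]] | Hg].
  + split=> //. have [hs ns] := rc_nd HYB Hinv Hnd Hs.
    have e0 := inv_nil He. rewrite /comp e0 cats0 in E.
    move=> a. have := eqv_pi HYB Hinv E. case: s {Hs hs' hse E} hs ns => ? ? /= hs ns.
    by move=> /(_ hs a) <-.
  + split=> //. rewrite (inv_nil Hg) => a. rewrite /cnt /=. lia.
- case=> hg ng. split=> //. case E: g.2 => [|x l].
  + right. split=> //. exists (@idp V A (psrc g)). split=> //.
    * by rewrite /Defs.ptgt E.
    * rewrite /comp E. exact: eqv_refl.
    * rewrite /comp E. exact: eqv_refl.
  + left. exists g, (@idp V A (ptgt tgt g)). split=> //.
    * apply: (nd_rc HYB Hinv Hnd (le_n _)) => //. by rewrite E.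
    * exact: idp_inv.
    * rewrite /comp /= cats0. case: g {hg ng E} => ? ?. exact: eqv_refl.
Qed.

Theorem garside_main : Garside src tgt sigma S.
Proof.
move=> g hg. have [ss [Hc Hm Hgc He]] := garside_ex HYB Hinv Hnd (le_n _) hg.
exists ss; split=> // s /Hm [a b _]. by apply/sharp_iff.
Qed.

Definition Pw (s t u : qp) : Prop :=
  [/\ valid u, ptgt tgt u = psrc t, sharp u & is_llcm s t (lmul [:: u] t)].
Definition Qc (Sc Tc : qp -> Prop) (u : qp) : Prop :=
  forall s t, Sc s -> Tc t -> Pw s t u.
Definition Th (Sc Tc : qp -> Prop) : option (seq qp) :=
  match excluded_middle_informative (exists u, Qc Sc Tc u) with
  | left H => Some [:: proj1_sig (constructive_indefinite_description _ H)]
  | right _ => None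
  end.
Definition theta (s t : qp) : option (seq qp) := Th (eqv s) (eqv t).

Lemma cls_eq s s' : eqv s s' -> eqv s = eqv s'.
Proof.
move=> E. apply: functional_extensionality => x.
apply: propositional_extensionality; split => H.
- exact: eqv_trans (eqv_sym E) H.
- exact: eqv_trans E H.
Qed.

Lemma Pw_inv s t u s' t' : eqv s s' -> eqv t t' -> Pw s t u -> Pw s' t' u.
Proof.
move=> Es Et [hu pu su Hl]. split=> //.
- by rewrite pu /psrc (eqv_fst Et).
- refine (is_llcm_eqv Es Et _ Hl). rewrite /lmul /=.
  exact: (eqv_catl (psrc u) (u.2 ++ [::]) Et).
Qed.

Lemma theta_Some s t ss : theta s t = Some ss -> exists u, ss = [:: u] /\ Pw s t u.
Proof.
rewrite /theta /Th. case: excluded_middle_informative => // H [<-].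
case: constructive_indefinite_description => u Hu /=.
exists u; split=> //. apply: Hu; exact: eqv_refl.
Qed.

Lemma has_llcm_theta s t : sharp s -> sharp t ->
  has_llcm src tgt sigma s t -> exists u, Qc (eqv s) (eqv t) u.
Proof.
move=> /sharp_iff [hs ns] /sharp_iff [ht nt] [h Hh].
have [hh nh] := llcm_sqf hs ht ns nt Hh.
have Hh' := Hh. case: Hh' => _ [_ _ [f [hf ef E]]] _.
have Pf : Pw s t f.
  split=> //.
  - apply/sharp_iff; split=> // a.
    have hc : valid (comp f t).
      rewrite /Defs.valid /comp /= vf_cat. split=> //.
      have e : t.1 = last f.1 (map tgt f.2) by rewrite /psrc in ef; rewrite -ef.
      rewrite -e. exact: ht.
    have := eqv_pi HYB Hinv E hc a. have := nh a.
    rewrite /comp /= pi_cat cnt_cat. lia.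
  - refine (is_llcm_eqv (eqv_refl src tgt sigma s) (eqv_refl src tgt sigma t) _ Hh).
    rewrite /lmul /= cats0. apply: eqv_sym. move: E. rewrite /comp /psrc. by [].
exists f => s' t' Es Et. exact: Pw_inv Es Et Pf.
Qed.

Lemma seq_eqv_refl ss : seq_eqv src tgt sigma ss ss.
Proof. elim: ss => //= s ss IH; split=> //; exact: eqv_refl. Qed.

Theorem perfect_main : perfect src tgt sigma S.
Proof.
exists theta. split.
- split.
  + move=> s t s' t' _ _ _ _ Es Et. rewrite /theta (cls_eq Es) (cls_eq Et).
    case: (Th _ _) => //= ss. exact: seq_eqv_refl.
  + move=> s t hs ht. split.
    * case E: (theta s t) => [ss|] // _. have [u [_ [_ _ _ Hl]]] := theta_Some E.
      by exists (lmul [:: u] t).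
    * move=> H. have Ex := has_llcm_theta hs ht H.
      rewrite /theta /Th. case: excluded_middle_informative => //.
  + move=> s t ss uu hs ht /theta_Some [u [-> [hu pu su Hu]]] /theta_Some [u' [-> [hu' pu' su' Hu']]].
    split.
    * exists (psrc u). by split.
    * by move=> x /= [<-|].
    * exists (psrc u'). by split.
    * by move=> x /= [<-|].
    * split=> //. apply: llcm_uniq Hu _. exact: is_llcm_sym.
- move=> s t ss _ _ /theta_Some [u [-> _]]. by [].
- move=> s t ss hs ht _ /theta_Some [u [-> [hu pu su Hu]]].
  move: hs ht => /sharp_iff [hs ns] /sharp_iff [ht nt].
  apply/sharp_iff. exact: llcm_sqf hs ht ns nt Hu.
Qed.

End Final.

Theorem corollary5p12 (V A : Type) (src tgt : A -> V)
    (sigma : A -> A -> A * A) :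
  qYB_map src tgt sigma ->
  involutive_qYB src tgt sigma ->
  nondegenerate_qYB src tgt sigma ->
  Garside src tgt sigma (rlcm_closure src tgt sigma) /\
  perfect src tgt sigma (rlcm_closure src tgt sigma).
Proof.
move=> H1 H2 H3. split; [exact: garside_main | exact: perfect_main].
Qed.
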